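(* Let $p$ be a prime. If $P$ is a non-cyclic finite $p$-group of exponent $p$, then there exists a finite solvable group $G$ whose Sylow $p$-subgroups are isomorphic to $P$ such that $G$ has a redundant Sylow $p$-subgroup.
   Context: For a finite group $G$ and a prime $p$, $G_p$ denotes the set of $p$-elements of $G$ and $\mathrm{Syl}_p(G)$ the set of Sylow $p$-subgroups of $G$. $G$ is said to have a redundant Sylow $p$-subgroup if $G_p$ is contained in the union of the members of some proper subset of $\mathrm{Syl}_p(G)$. *)

(* Defs.v *)
From mathcomp Require Import all_boot all_fingroup all_solvable.
Set Implicit Arguments. Unset Strict Implicit. Unset Printing Implicit Defensive.
Local Open Scope group_scope.

Definition p_elts (gT : finGroupType) (p : nat) (G : {set gT}) : {set gT} :=
  [set x in G | p.-elt x].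

Definition has_redundant_Sylow (gT : finGroupType) (p : nat) (G : {set gT}) : Prop :=
  exists2 S : {set {group gT}}, S \proper 'Syl_p(G) &
    p_elts p G \subset \bigcup_(Q in S) Q.

(* Main.v *)
Require Import Defs.
From mathcomp Require Import all_boot all_fingroup all_solvable.
From mathcomp Require Import ssralg zmodp.
Set Implicit Arguments. Unset Strict Implicit. Unset Printing Implicit Defensive.
Local Open Scope group_scope.

Section Constr.
Variables (pT : finGroupType) (q : nat).
Hypothesis q_gt1 : 1 < q.
Local Notation T := (pT * 'Z_q)%type.

Definition rho_fun (x : pT) (z : T) : T := (z.1 * x, z.2).
Lemma rho_inj x : injective (rho_fun x).
Proof. by move=> [a i] [b j] [/mulIg -> ->]. Qed.
Definition rho x : {perm T} := perm (@rho_inj x).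
Lemma rhoE x z : rho x z = (z.1 * x, z.2).
Proof. by rewrite permE. Qed.
Lemma rho_morphM : {in [set: pT] &, {morph rho : x y / x * y}}.
Proof. by move=> x y _ _; apply/permP => z; rewrite permM !rhoE /= mulgA. Qed.
Canonical rho_morph := Morphism rho_morphM.
Lemma rho_injm : 'injm rho_morph.
Proof.
apply/injmP => x y _ _ /= /permP /(_ (1, 0%R)); rewrite !rhoE /= !mul1g.
by case.
Qed.

Definition sig_fun (f : {ffun pT -> 'Z_q}) (z : T) : T := (z.1, z.2 + f z.1)%R.
Lemma sig_inj f : injective (sig_fun f).
Proof. move=> [a i] [b j] e; have ea : a = b := f_equal fst e; subst b; congr pair; have e2 : (i + f a = j + f a)%R := f_equal snd e. exact: (GRing.addIr _ e2). Qed.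
Definition sig f : {perm T} := perm (@sig_inj f).
Lemma sigE f z : sig f z = (z.1, z.2 + f z.1)%R.
Proof. by rewrite permE. Qed.
Lemma sig_injective : injective sig.
Proof.
move=> f g /permP e; apply/ffunP => y; move: (e (y, 0%R)).
by rewrite !sigE /= !GRing.add0r; case.
Qed.

Definition Vset := [set sig f | f : {ffun pT -> 'Z_q}].
Lemma sig0 : sig [ffun=> 0%R] = 1.
Proof. by apply/permP => z; rewrite sigE perm1 ffunE GRing.addr0; case: z. Qed.
Lemma sigM f g : sig f * sig g = sig [ffun y => f y + g y]%R.
Proof. by apply/permP => z; rewrite permM !sigE /= ffunE GRing.addrA. Qed.
Lemma Vgs : group_set Vset.
Proof.
apply/group_setP; split; first by rewrite -sig0 imset_f.
move=> _ _ /imsetP[f _ ->] /imsetP[g _ ->]; by rewrite sigM imset_f.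
Qed.
Canonical VG := Group Vgs.

Lemma cardV : #|VG| = (q ^ #|pT|)%N.
Proof. by rewrite /= card_imset ?card_ffun ?card_ord ?Zp_cast //; apply: sig_injective. Qed.

Lemma abelV : abelian VG.
Proof.
apply/centsP => _ /imsetP[f _ ->] _ /imsetP[g _ ->].
rewrite /commute !sigM; congr sig; apply/ffunP => y; rewrite !ffunE GRing.addrC //.
Qed.

Lemma sig_conj f x : sig f ^ rho x = sig [ffun y => f (y * x^-1)].
Proof.
rewrite /conjg -(morphV rho_morph) ?inE //=.
apply/permP => z; rewrite !permM; rewrite [rho_morph _]/= !rhoE !sigE /= ffunE -mulgA mulVg mulg1.
by case: z.
Qed.

Lemma rho_normV (A : {set pT}) : rho @: A \subset 'N(VG).
Proof.
apply/subsetP => _ /imsetP[x _ ->]; rewrite inE sub_conjg.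
apply/subsetP => _ /imsetP[f _ ->]; rewrite mem_conjg invgK sig_conj imset_f //.
Qed.

Lemma rhoV_TI (A : {group pT}) : VG :&: (rho @: A) = 1.
Proof.
apply/eqP; rewrite eqEsubset sub1set !inE group1 /=.
have -> : (1 : {perm T}) = rho 1 by rewrite -(morph1 rho_morph).
rewrite imset_f // andbT; apply/subsetP => v.
rewrite inE => /andP[/imsetP[f _ ->] /imsetP[x _ e]].
have := e; move/permP => /(_ (1, 0%R)); rewrite sigE rhoE /= mul1g => -[ex _].
by rewrite e -ex (morph1 rho_morph) inE.
Qed.

Variables (p : nat) (P : {group pT}).
Hypotheses (pr_p : prime p) (pr_q : prime q) (qp : q != p) (pP : p.-group P)
  (ncP : ~~ cyclic P).

Let H := (rho_morph @* P)%G.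
Let G := (VG <*> H)%G.

Lemma hN : H \subset 'N(VG).
Proof. by rewrite /= morphimEsub ?subsetT // rho_normV. Qed.
Lemma hTI : VG :&: H = 1.
Proof. by rewrite /= morphimEsub ?subsetT // rhoV_TI. Qed.
Lemma eG : G :=: VG * H.
Proof. exact: norm_joinEr hN. Qed.
Lemma pH : p.-group H.
Proof. exact: morphim_pgroup. Qed.

Lemma solG : solvable G.
Proof.
rewrite (series_sol (H := VG)) ?normalYl ?hN // abelian_sol ?abelV //=.
rewrite norm_joinEr ?hN // quotientMidl.
exact: pgroup_sol (quotient_pgroup _ pH).
Qed.

Lemma HSyl : H \in 'Syl_p(G).
Proof.
rewrite inE /pHall joing_subr pH /=.
rewrite -divgS ?joing_subr // eG TI_cardMg ?hTI // mulnK ?cardG_gt0 //.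
by rewrite cardV pnatX pnatE // !inE qp.
Qed.

Lemma SylI (S : {group {perm T}}) : S \in 'Syl_p(G) -> S \isog P.
Proof.
rewrite inE => sS; have := HSyl; rewrite inE => sH.
have [x _ ->] := Sylow_trans sH sS.
apply: isog_trans (isog_symr (conj_isog H x)) _.
rewrite isog_sym; exact: sub_isog (subsetT P) rho_injm.
Qed.


Lemma redund : exists2 S : {set {group {perm T}}}, S \proper 'Syl_p(G) &
    [set x in G | p.-elt x] \subset \bigcup_(Q in S) Q.
Proof.
exists ('Syl_p(G) :\ H); first exact: properD1 HSyl.
apply/subsetP => g; rewrite inE => /andP[Gg pg].
case: (boolP (g \in H)) => Hg.
  have := Hg; case/morphimP => a _ Pa ga.
  have : ~~ (P \subset <[a]>).
    apply: contra ncP => sPa; apply/cyclicP; exists a; apply/eqP.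
    by rewrite eqEsubset sPa cycle_subG.
  case/subsetPn => b Pb nb.
  pose w := sig [ffun y => ((y \in <[a]>)%:R : 'Z_q)%R].
  have Vw : w \in VG by rewrite imset_f.
  have Gw : w \in G by rewrite (subsetP (joing_subl _ _)).
  have cw : commute g w.
    apply/permP => z; rewrite ga !permM !rhoE !sigE /= !ffunE.
    by rewrite groupMr ?cycle_id.
  have sHw : (H :^ w)%G \in 'Syl_p(G).
    have sH := HSyl; rewrite inE in sH; by rewrite inE pHallJ.
  apply/bigcupP; exists (H :^ w)%G.
    apply/setD1P; split; last exact: sHw.
    apply/negP => /eqP /(congr1 (@gval _)) /= eHw.
    have : rho b ^ w \in H :^ w by rewrite memJ_conjg /= morphimEsub ?subsetT ?imset_f.
    rewrite eHw => /morphimP[c _ Pc ec].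
    have := conjgC (rho b) w; rewrite ec => /permP /(_ (1, 0%R)).
    rewrite !permM !rhoE !sigE /= !ffunE mul1g group1 (negPf nb) /=.
    case=> _ /eqP; by rewrite !add0n modn_mod mod0n modn_small.
  have ew : g ^ w = g by rewrite /conjg cw mulKg.
  by rewrite -ew memJ_conjg.
have pcg : p.-group <[g]> by [].
have sgG : <[g]> \subset G by rewrite cycle_subG.
have [Q sQ sgQ] := Sylow_superset sgG pcg.
apply/bigcupP; exists Q; last by rewrite -cycle_subG.
rewrite !inE sQ andbT; apply: contraNneq Hg => eQ.
by rewrite -eQ -cycle_subG.
Qed.
End Constr.

Theorem theoremA (p : nat) (pT : finGroupType) (P : {group pT}) :
  prime p -> p.-group P -> ~~ cyclic P -> exponent P = p ->
  exists (gT : finGroupType) (G : {group gT}),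
    [/\ solvable G,
        (forall S : {group gT}, S \in 'Syl_p(G) -> S \isog P)
      & has_redundant_Sylow p G].
Proof.
move=> pr_p pP ncP _.
pose q := if p == 2 then 3 else 2.
have q_gt1 : 1 < q by rewrite /q; case: ifP.
have pr_q : prime q by rewrite /q; case: ifP.
have qp : q != p by rewrite /q; case: ifP => [/eqP -> //| /negbT]; rewrite eq_sym.
exists _, (VG pT q <*> (rho_morph pT q @* P)%G)%G; split.
- exact: (solG q pP).
- by move=> S; apply: (SylI q_gt1 pr_q qp pP).
- exact: (redund q_gt1 pr_q qp pP ncP).
Qed.
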